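(* For every $n\equiv 3 \pmod{16}$ with $n\geq 19$, there exists an almost 2-perfect maximum 8-cycle packing of $K_n$.
   Context: An 8-cycle packing of $K_n$ on vertex set $\mathcal{X}$ is a triple $(\mathcal{X},\mathcal{C},\mathcal{L})$ with $\mathcal{C}$ a collection of pairwise edge-disjoint 8-cycles of $K_n$ and leave $\mathcal{L}$ the set of edges in no cycle of $\mathcal{C}$; it is maximum if $|\mathcal{L}|$ is minimum among all 8-cycle packings of $K_n$. For an 8-cycle $C$, an inside 8-cycle of $C$ is an 8-cycle on the same vertex set sharing no edge with $C$. The packing is almost 2-perfect if one can choose for each $C\in\mathcal{C}$ an inside 8-cycle $C'$ such that $(\mathcal{X},\{C'\},\mathcal{L})$ is again an 8-cycle packing with the same leave. *)

(* Defs.v *)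
From HB Require Import structures.
From mathcomp Require Import all_boot.
Set Implicit Arguments. Unset Strict Implicit. Unset Printing Implicit Defensive.

Definition Kn_edges (n : nat) : {set {set 'I_n}} := [set e : {set 'I_n} | #|e| == 2].

Definition is_8cycle (n : nat) (c : 8.-tuple 'I_n) : bool := uniq c.

Definition cyc_edges (n : nat) (c : 8.-tuple 'I_n) : {set {set 'I_n}} :=
  [set [set tnth c i; tnth c (inord ((i.+1) %% 8) : 'I_8)] | i : 'I_8].

Definition cyc_verts (n : nat) (c : 8.-tuple 'I_n) : {set 'I_n} := [set x in c].

Definition is_packing (n : nat) (P : seq (8.-tuple 'I_n)) : bool :=
  all (@is_8cycle n) P &&
  pairwise (fun c d => [disjoint cyc_edges c & cyc_edges d]) P.

Definition leave (n : nat) (P : seq (8.-tuple 'I_n)) : {set {set 'I_n}} :=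
  Kn_edges n :\: \bigcup_(c <- P) cyc_edges c.

Definition is_maximum_packing (n : nat) (P : seq (8.-tuple 'I_n)) : Prop :=
  is_packing P /\
  forall Q : seq (8.-tuple 'I_n), is_packing Q -> #|leave P| <= #|leave Q|.

Definition inside_8cycle (n : nat) (c c' : 8.-tuple 'I_n) : bool :=
  [&& is_8cycle c', cyc_verts c' == cyc_verts c &
      [disjoint cyc_edges c' & cyc_edges c]].

Definition almost_2perfect (n : nat) (P : seq (8.-tuple 'I_n)) : Prop :=
  exists P' : seq (8.-tuple 'I_n),
    [/\ size P' = size P, all2 (@inside_8cycle n) P P',
        is_packing P' & leave P' = leave P].

(* Main.v *)
Require Import Defs.
From mathcomp Require Import all_boot zify.
Set Implicit Arguments. Unset Strict Implicit. Unset Printing Implicit Defensive.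

Lemma val_nxt (i : 'I_8) : (inord (i.+1 %% 8) : 'I_8) = i.+1 %% 8 :> nat.
Proof. by rewrite inordK // ltn_pmod. Qed.

Lemma cyc_edgesP n (c : 8.-tuple 'I_n) e :
  reflect (exists i : 'I_8, e = [set tnth c i; tnth c (inord (i.+1 %% 8))])
          (e \in cyc_edges c).
Proof.
apply: (iffP imsetP) => [[i _ ->]|[i ->]]; first by exists i.
by exists i.
Qed.

Lemma set2_eq (T : finType) (a b c d : T) :
  [set a; b] = [set c; d] -> (a = c /\ b = d) \/ (a = d /\ b = c).
Proof.
move=> E.
have ha : a \in [set c; d] by rewrite -E set21.
have hb : b \in [set c; d] by rewrite -E set22.
have hc : c \in [set a; b] by rewrite E set21.
have hd : d \in [set a; b] by rewrite E set22.
move: ha hb hc hd; rewrite !in_set2.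
case/orP=> /eqP ha; case/orP=> /eqP hb; case/orP=> /eqP hc; case/orP=> /eqP hd;
  subst. all: try (by left; split). all: try (by right; split).
Qed.

Lemma edge_inj8 (i j : nat) : i < 8 -> j < 8 -> i = j.+1 %% 8 -> i.+1 %% 8 = j -> False.
Proof. move=> *; lia. Qed.

Lemma nxt_neq8 (i : nat) : i < 8 -> i != i.+1 %% 8.
Proof. move=> *; apply/eqP; lia. Qed.

Lemma tnth_nxt_neq n (c : 8.-tuple 'I_n) (i : 'I_8) :
  uniq c -> tnth c i != tnth c (inord (i.+1 %% 8)).
Proof.
move=> /tuple_uniqP inj; apply/negP=> /eqP /inj /(congr1 val) /=.
rewrite val_nxt => E; move: (nxt_neq8 (ltn_ord i)); by rewrite {1}E eqxx.
Qed.

Lemma cyc_edges_sub n (c : 8.-tuple 'I_n) : uniq c -> cyc_edges c \subset Kn_edges n.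
Proof.
move=> uc; apply/subsetP => e /cyc_edgesP [i ->].
by rewrite inE cards2 tnth_nxt_neq.
Qed.

Lemma card_cyc_edges n (c : 8.-tuple 'I_n) : uniq c -> #|cyc_edges c| = 8.
Proof.
move=> uc; have inj := tuple_uniqP _ uc.
rewrite /cyc_edges card_imset ?card_ord // => i j /set2_eq [[/inj -> //]|[]].
move=> /inj E1 /inj E2; exfalso.
apply: (@edge_inj8 i j (ltn_ord i) (ltn_ord j)).
  by rewrite -val_nxt -E1.
by rewrite -val_nxt E2.
Qed.

Lemma sub_bigcup_seq (T : finType) (I : eqType) (s : seq I) (F : I -> {set T}) y :
  y \in s -> F y \subset \bigcup_(x <- s) F x.
Proof.
elim: s => //= a s IH; rewrite inE big_cons => /orP[/eqP ->|/IH H].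
  exact: subsetUl.
exact: subset_trans H (subsetUr _ _).
Qed.

Lemma card_bigcup_le (T : finType) (I : Type) (s : seq I) (F : I -> {set T}) :
  #|\bigcup_(x <- s) F x| <= \sum_(x <- s) #|F x|.
Proof.
elim: s => [|a s IH]; first by rewrite !big_nil cards0.
rewrite !big_cons cardsU; apply: leq_trans (leq_subr _ _) _.
by rewrite leq_add2l.
Qed.

Lemma card_bigcup_eq_disj (T : finType) (I : eqType) (s : seq I) (F : I -> {set T}) :
  \sum_(x <- s) #|F x| = #|\bigcup_(x <- s) F x| ->
  pairwise (fun x y => [disjoint F x & F y]) s.
Proof.
elim: s => [|a s IH] //; rewrite !big_cons cardsU pairwise_cons => E.
have le1 := card_bigcup_le s F.
have le2 : #|F a :&: \bigcup_(x <- s) F x| <= #|F a| by apply: subset_leq_card; apply: subsetIl.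
have E0 : #|F a :&: \bigcup_(x <- s) F x| = 0 /\ \sum_(x <- s) #|F x| = #|\bigcup_(x <- s) F x| by lia.
case: E0 => /eqP; rewrite cards_eq0 => /eqP I0 /IH ->; rewrite andbT.
apply/allP => y ys; rewrite -setI_eq0; apply/eqP/eqP; rewrite -subset0 -I0.
by apply: setIS; apply: sub_bigcup_seq.
Qed.

Lemma card_bigcup_disj (T : finType) (I : eqType) (s : seq I) (F : I -> {set T}) :
  pairwise (fun x y => [disjoint F x & F y]) s ->
  #|\bigcup_(x <- s) F x| = \sum_(x <- s) #|F x|.
Proof.
elim: s => [|a s IH]; first by rewrite !big_nil cards0.
rewrite pairwise_cons => /andP[ha /IH {}IH]; rewrite !big_cons cardsU IH.
suff -> : F a :&: \bigcup_(x <- s) F x = set0 by rewrite cards0 subn0.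
elim: s ha {IH} => [|b s IH2]; first by rewrite big_nil setI0.
rewrite /= => /andP[hb /IH2 H]; rewrite big_cons setIUr H setU0.
by apply/eqP; rewrite setI_eq0.
Qed.

Lemma card_Kn n : #|Kn_edges n| = 'C(n, 2).
Proof. by rewrite /Kn_edges card_draws card_ord. Qed.

Lemma sum_card8 n (Q : seq (8.-tuple 'I_n)) : all (@is_8cycle n) Q ->
  \sum_(c <- Q) #|cyc_edges c| = 8 * size Q.
Proof.
elim: Q => [|c Q IH]; first by rewrite big_nil muln0.
by rewrite /= big_cons => /andP[uc /IH ->]; rewrite card_cyc_edges // mulnS.
Qed.

Lemma bigcup_sub n (Q : seq (8.-tuple 'I_n)) : all (@is_8cycle n) Q ->
  \bigcup_(c <- Q) cyc_edges c \subset Kn_edges n.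
Proof.
elim: Q => [|c Q IH]; first by rewrite big_nil sub0set.
by rewrite /= big_cons => /andP[uc /IH H]; rewrite subUset H cyc_edges_sub.
Qed.

Lemma leave_count n (Q : seq (8.-tuple 'I_n)) : is_packing Q ->
  #|leave Q| + 8 * size Q = 'C(n, 2).
Proof.
case/andP=> au pw; rewrite /leave cardsD.
rewrite (setIidPr (bigcup_sub au)) card_bigcup_disj // sum_card8 // -card_Kn.
rewrite subnK // -(sum_card8 au) -card_bigcup_disj //.
exact: subset_leq_card (bigcup_sub au).
Qed.

Definition nxt (i : nat) := i.+1 %% 8.
Definition nadj (s : seq nat) (x y : nat) : bool :=
  has (fun i => ((nth 0 s i == x) && (nth 0 s (nxt i) == y)) ||
                ((nth 0 s i == y) && (nth 0 s (nxt i) == x))) (iota 0 8).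
Definition ct (m : nat) (s : seq nat) : 8.-tuple 'I_m.+1 :=
  insubd (nseq_tuple 8 ord0) (map inord s).

Lemma ct_val m s : size s = 8 -> val (ct m s) = map inord s.
Proof. by move=> Hs; rewrite val_insubd size_map Hs eqxx. Qed.

Lemma ct_tnth m s (i : 'I_8) : size s = 8 -> tnth (ct m s) i = inord (nth 0 s i).
Proof.
move=> Hs; rewrite (tnth_nth ord0) ct_val // (nth_map 0) // Hs; exact: ltn_ord.
Qed.

Lemma ct_uniq m s : size s = 8 -> uniq s -> all (fun x => x < m.+1) s -> uniq (ct m s).
Proof.
move=> Hs us /allP al; rewrite ct_val // map_inj_in_uniq // => x y xs ys E.
by rewrite -(inordK (al _ xs)) E inordK // al.
Qed.

Lemma nth_lt m s i : all (fun x => x < m.+1) s -> nth 0 s i < m.+1.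
Proof.
move=> /allP al; case: (ltnP i (size s)) => H; first by apply: al; apply: mem_nth.
by rewrite nth_default.
Qed.

Lemma inord_inj m x y : x < m.+1 -> y < m.+1 -> (inord x : 'I_m.+1) = inord y -> x = y.
Proof. by move=> hx hy E; rewrite -(inordK hx) E inordK. Qed.

Lemma ct_edge m s x y : size s = 8 -> all (fun x => x < m.+1) s -> x < m.+1 -> y < m.+1 ->
  ([set inord x; inord y] \in cyc_edges (ct m s)) = nadj s x y.
Proof.
move=> Hs al hx hy; apply/cyc_edgesP/hasP.
- case=> i; rewrite !ct_tnth // val_nxt => /set2_eq E.
  exists (val i); first by rewrite mem_iota /= ltn_ord.
  case: E => [[E1 E2]|[E1 E2]].
    have {}E1 := inord_inj hx (nth_lt _ al) E1.
    have {}E2 := inord_inj hy (nth_lt _ al) E2.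
    by apply/orP; left; rewrite /nxt -E1 -E2 !eqxx.
  have {}E1 := inord_inj hx (nth_lt _ al) E1.
  have {}E2 := inord_inj hy (nth_lt _ al) E2.
  by apply/orP; right; rewrite /nxt -E1 -E2 !eqxx.
- case=> i; rewrite mem_iota /= => hi C; exists (Ordinal hi); move: C.
  rewrite !ct_tnth // val_nxt /= /nxt; case/orP=> /andP[/eqP -> /eqP ->] //.
  by rewrite setUC.
Qed.

Definition tri m : {set {set 'I_m.+1}} :=
  [set inord 0; inord 1] |: [set [set inord 0; inord 2]; [set inord 1; inord 2]].

Lemma card_tri m : #|tri m| <= 3.
Proof.
rewrite /tri cardsU1 cards2.
by case: (_ \notin _); case: (_ != _).
Qed.

Lemma tri_mem m x y : x < 3 -> y < 3 -> x != y ->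
  [set inord x; inord y] \in tri m.
Proof.
rewrite /tri !inE.
case: x => [|[|[|x]]] //; case: y => [|[|[|y]]] //= _ _ _;
  rewrite ?eqxx ?orbT //; rewrite setUC eqxx ?orbT //.
Qed.

Lemma decomp_ok m (PS : seq (seq nat)) :
  2 < m.+1 ->
  all (fun s => (size s == 8) && uniq s && all (fun x => x < m.+1) s) PS ->
  (forall x y, x < m.+1 -> y < m.+1 -> x != y -> ~~ ((x < 3) && (y < 3)) ->
     has (fun s => nadj s x y) PS) ->
  8 * size PS + 3 = 'C(m.+1, 2) ->
  is_packing (map (ct m) PS) /\ leave (map (ct m) PS) = tri m.
Proof.
move=> H0 /allP H1 H2 H4.
set P := map (ct m) PS.
have au : all (@is_8cycle m.+1) P.
  apply/allP => c /mapP [s sP ->]; have /andP[/andP[/eqP h1 h2] h3] := H1 s sP.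
  exact: ct_uniq.
have sz : \sum_(c <- P) #|cyc_edges c| = 8 * size PS by rewrite sum_card8 // size_map.
set U := \bigcup_(c <- P) cyc_edges c.
have cover : Kn_edges m.+1 :\: U \subset tri m.
  apply/subsetP => e; rewrite inE => /andP[eU]; rewrite inE => /cards2P [u [v [uv Ee]]].
  rewrite Ee in eU *.
  have hu := ltn_ord u; have hv := ltn_ord v.
  have Eu : u = inord u by rewrite inord_val.
  have Ev : v = inord v by rewrite inord_val.
  have uv' : (u : nat) != v by [].
  case: (boolP ((u < 3) && (v < 3))) => [/andP[u3 v3]|nt].
    by rewrite Eu Ev; apply: tri_mem.
  exfalso; move: (H2 _ _ hu hv uv' nt) => /hasP [s sP ns].
  have /andP[/andP[/eqP h1 h2] h3] := H1 s sP.
  move: eU; rewrite Eu Ev => /negP; apply.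
  apply: (subsetP (sub_bigcup_seq _ (map_f (ct m) sP))).
  by rewrite ct_edge.
have cardU : 'C(m.+1, 2) <= 3 + #|U|.
  rewrite -card_Kn -(cardsID U (Kn_edges m.+1)) addnC leq_add //.
    exact: leq_trans (subset_leq_card cover) (card_tri m).
  by apply: subset_leq_card; apply: subsetIr.
have eqU : \sum_(c <- P) #|cyc_edges c| = #|U|.
  apply/eqP; rewrite eqn_leq card_bigcup_le andbT sz; lia.
have pk : is_packing P by rewrite /is_packing au /=; exact: card_bigcup_eq_disj.
split=> //.
have lc := leave_count pk; rewrite size_map in lc.
apply/eqP; rewrite eqEcard cover /=.
have -> : #|leave P| = 3 by lia.
exact: card_tri.
Qed.

Definition ninside (s s' : seq nat) : bool :=
  [&& all (fun x => x \in s) s', all (fun x => x \in s') s &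
      ~~ has (fun i => nadj s (nth 0 s' i) (nth 0 s' (nxt i))) (iota 0 8)].

Lemma ct_mem m s z : size s = 8 -> (z \in ct m s) = (z \in map inord s).
Proof. by move=> Hs; rewrite -(ct_val m Hs). Qed.

Lemma ct_inside m s s' : size s = 8 -> size s' = 8 ->
  all (fun x => x < m.+1) s -> all (fun x => x < m.+1) s' -> uniq s' ->
  ninside s s' -> inside_8cycle (ct m s) (ct m s').
Proof.
move=> Hs Hs' al al' us /and3P[/allP s1 /allP s2 nh].
apply/and3P; split; first exact: ct_uniq.
  apply/eqP/setP => z; rewrite !inE !ct_mem //.
  apply/mapP/mapP => [][x xs ->]; exists x => //; [exact: s1 | exact: s2].
rewrite -setI_eq0; apply/eqP/setP => e; rewrite !inE.
apply/negbTE/negP => /andP[/cyc_edgesP [i ->] h2].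
move: h2; rewrite !ct_tnth // val_nxt ct_edge //; try exact: nth_lt.
move=> h; move/negP: nh; apply; apply/hasP; exists (val i).
  by rewrite mem_iota /= ltn_ord.
exact: h.
Qed.

Definition B19 : seq (seq nat) := [:: [:: 3; 4; 5; 6; 7; 8; 9; 10];
  [:: 3; 9; 16; 18; 14; 12; 5; 7];
  [:: 4; 10; 17; 11; 15; 13; 6; 8];
  [:: 5; 3; 18; 12; 16; 14; 7; 9];
  [:: 6; 4; 11; 13; 17; 15; 8; 10];
  [:: 0; 3; 2; 12; 8; 14; 9; 17];
  [:: 0; 4; 2; 13; 9; 15; 10; 18];
  [:: 0; 5; 2; 14; 10; 16; 3; 11];
  [:: 0; 6; 2; 15; 3; 17; 4; 12];
  [:: 0; 7; 2; 16; 4; 18; 5; 13];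
  [:: 0; 8; 2; 17; 5; 11; 6; 14];
  [:: 0; 9; 2; 18; 6; 12; 7; 15];
  [:: 0; 10; 2; 11; 7; 13; 8; 16];
  [:: 1; 3; 6; 15; 4; 14; 13; 16];
  [:: 1; 4; 7; 16; 5; 15; 14; 17];
  [:: 1; 5; 8; 17; 6; 16; 15; 18];
  [:: 1; 6; 9; 18; 7; 17; 16; 11];
  [:: 1; 7; 10; 11; 8; 18; 17; 12];
  [:: 1; 8; 3; 12; 9; 11; 18; 13];
  [:: 1; 9; 4; 13; 10; 12; 11; 14];
  [:: 1; 10; 5; 14; 3; 13; 12; 15]].
Definition B19' : seq (seq nat) := [:: [:: 3; 6; 9; 4; 7; 10; 5; 8];
  [:: 3; 5; 9; 7; 18; 12; 16; 14];
  [:: 4; 6; 10; 8; 11; 13; 17; 15];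
  [:: 5; 7; 3; 9; 12; 14; 18; 16];
  [:: 6; 8; 4; 10; 13; 15; 11; 17];
  [:: 0; 8; 9; 2; 14; 17; 3; 12];
  [:: 0; 9; 10; 2; 15; 18; 4; 13];
  [:: 0; 10; 3; 2; 16; 11; 5; 14];
  [:: 0; 3; 4; 2; 17; 12; 6; 15];
  [:: 0; 4; 5; 2; 18; 13; 7; 16];
  [:: 0; 5; 6; 2; 11; 14; 8; 17];
  [:: 0; 6; 7; 2; 12; 15; 9; 18];
  [:: 0; 7; 8; 2; 13; 16; 10; 11];
  [:: 1; 4; 16; 3; 13; 6; 14; 15];
  [:: 1; 5; 17; 4; 14; 7; 15; 16];
  [:: 1; 6; 18; 5; 15; 8; 16; 17];
  [:: 1; 7; 11; 6; 16; 9; 17; 18];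
  [:: 1; 8; 12; 7; 17; 10; 18; 11];
  [:: 1; 9; 13; 8; 18; 3; 11; 12];
  [:: 1; 10; 14; 9; 11; 4; 12; 13];
  [:: 1; 3; 15; 10; 12; 5; 13; 14]].
Definition B32 : seq (seq nat) := [:: [:: 0; 16; 3; 19; 2; 18; 1; 17];
  [:: 0; 18; 3; 17; 2; 16; 1; 19];
  [:: 0; 20; 3; 23; 2; 22; 1; 21];
  [:: 0; 22; 3; 21; 2; 20; 1; 23];
  [:: 0; 24; 3; 27; 2; 26; 1; 25];
  [:: 0; 26; 3; 25; 2; 24; 1; 27];
  [:: 0; 28; 3; 31; 2; 30; 1; 29];
  [:: 0; 30; 3; 29; 2; 28; 1; 31];
  [:: 4; 16; 7; 19; 6; 18; 5; 17];
  [:: 4; 18; 7; 17; 6; 16; 5; 19];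
  [:: 4; 20; 7; 23; 6; 22; 5; 21];
  [:: 4; 22; 7; 21; 6; 20; 5; 23];
  [:: 4; 24; 7; 27; 6; 26; 5; 25];
  [:: 4; 26; 7; 25; 6; 24; 5; 27];
  [:: 4; 28; 7; 31; 6; 30; 5; 29];
  [:: 4; 30; 7; 29; 6; 28; 5; 31];
  [:: 8; 16; 11; 19; 10; 18; 9; 17];
  [:: 8; 18; 11; 17; 10; 16; 9; 19];
  [:: 8; 20; 11; 23; 10; 22; 9; 21];
  [:: 8; 22; 11; 21; 10; 20; 9; 23];
  [:: 8; 24; 11; 27; 10; 26; 9; 25];
  [:: 8; 26; 11; 25; 10; 24; 9; 27];
  [:: 8; 28; 11; 31; 10; 30; 9; 29];
  [:: 8; 30; 11; 29; 10; 28; 9; 31];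
  [:: 12; 16; 15; 19; 14; 18; 13; 17];
  [:: 12; 18; 15; 17; 14; 16; 13; 19];
  [:: 12; 20; 15; 23; 14; 22; 13; 21];
  [:: 12; 22; 15; 21; 14; 20; 13; 23];
  [:: 12; 24; 15; 27; 14; 26; 13; 25];
  [:: 12; 26; 15; 25; 14; 24; 13; 27];
  [:: 12; 28; 15; 31; 14; 30; 13; 29];
  [:: 12; 30; 15; 29; 14; 28; 13; 31]].
Definition B32' : seq (seq nat) := [:: [:: 0; 18; 3; 17; 2; 16; 1; 19];
  [:: 0; 16; 3; 19; 2; 18; 1; 17];
  [:: 0; 22; 3; 21; 2; 20; 1; 23];
  [:: 0; 20; 3; 23; 2; 22; 1; 21];
  [:: 0; 26; 3; 25; 2; 24; 1; 27];
  [:: 0; 24; 3; 27; 2; 26; 1; 25];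
  [:: 0; 30; 3; 29; 2; 28; 1; 31];
  [:: 0; 28; 3; 31; 2; 30; 1; 29];
  [:: 4; 18; 7; 17; 6; 16; 5; 19];
  [:: 4; 16; 7; 19; 6; 18; 5; 17];
  [:: 4; 22; 7; 21; 6; 20; 5; 23];
  [:: 4; 20; 7; 23; 6; 22; 5; 21];
  [:: 4; 26; 7; 25; 6; 24; 5; 27];
  [:: 4; 24; 7; 27; 6; 26; 5; 25];
  [:: 4; 30; 7; 29; 6; 28; 5; 31];
  [:: 4; 28; 7; 31; 6; 30; 5; 29];
  [:: 8; 18; 11; 17; 10; 16; 9; 19];
  [:: 8; 16; 11; 19; 10; 18; 9; 17];
  [:: 8; 22; 11; 21; 10; 20; 9; 23];
  [:: 8; 20; 11; 23; 10; 22; 9; 21];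
  [:: 8; 26; 11; 25; 10; 24; 9; 27];
  [:: 8; 24; 11; 27; 10; 26; 9; 25];
  [:: 8; 30; 11; 29; 10; 28; 9; 31];
  [:: 8; 28; 11; 31; 10; 30; 9; 29];
  [:: 12; 18; 15; 17; 14; 16; 13; 19];
  [:: 12; 16; 15; 19; 14; 18; 13; 17];
  [:: 12; 22; 15; 21; 14; 20; 13; 23];
  [:: 12; 20; 15; 23; 14; 22; 13; 21];
  [:: 12; 26; 15; 25; 14; 24; 13; 27];
  [:: 12; 24; 15; 27; 14; 26; 13; 25];
  [:: 12; 30; 15; 29; 14; 28; 13; 31];
  [:: 12; 28; 15; 31; 14; 30; 13; 29]].
Definition good (N : nat) (B : seq (seq nat)) : bool :=
  all (fun b => [&& size b == 8, uniq b & all (fun x => x < N) b]) B.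
Definition cov19 (B : seq (seq nat)) : bool :=
  all (fun x => all (fun y => (x == y) || ((x < 3) && (y < 3)) || has (fun b => nadj b x y) B)
    (iota 0 19)) (iota 0 19).
Definition cov32 (B : seq (seq nat)) : bool :=
  all (fun x => all (fun y => has (fun b => nadj b x (16 + y)) B) (iota 0 16)) (iota 0 16).

Lemma data_ok : [&& good 19 B19, good 19 B19', good 32 B32, good 32 B32',
  cov19 B19, cov19 B19', cov32 B32, cov32 B32' &
  [&& all2 ninside B19 B19', all2 ninside B32 B32', size B19 == 21 & size B32 == 32]].
Proof. vm_compute. reflexivity. Qed.

Definition emb19 (i x : nat) := if x < 3 then x else x + 16 * i.
Definition emb32 (i j x : nat) := if x < 16 then 3 + 16 * i + x else 3 + 16 * j + (x - 16).
Definition pairs k := [seq (i, j) | j <- iota 0 k, i <- iota 0 j].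
Definition PSof (B1 B2 : seq (seq nat)) k :=
  [seq map (emb19 i) b | i <- iota 0 k, b <- B1] ++
  [seq map (emb32 p.1 p.2) b | p <- pairs k, b <- B2].

Lemma emb19_inj i : injective (emb19 i).
Proof. move=> x y; rewrite /emb19; case: (ltnP x 3); case: (ltnP y 3); lia. Qed.

Lemma emb32_inj i j : i < j -> injective (emb32 i j).
Proof. move=> ij x y; rewrite /emb32; case: (ltnP x 16); case: (ltnP y 16); lia. Qed.

Lemma mem_pairs k i j : ((i, j) \in pairs k) = (i < j < k).
Proof.
apply/allpairsPdep/idP => [[y [x [ys]]]|/andP[ij jk]].
  move: ys; rewrite !mem_iota /= => ys xs [-> ->]; lia.
by exists j, i; rewrite !mem_iota /=; split => //; lia.
Qed.

Lemma sumn_iota k : sumn (iota 0 k) = 'C(k, 2).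
Proof.
elim: k => // k IH; rewrite -addn1 iotaD sumn_cat IH /= add0n addn0 addn1 binS bin1.
by rewrite addnC.
Qed.

Lemma size_pairs k : size (pairs k) = 'C(k, 2).
Proof.
rewrite /pairs size_allpairs_dep -sumn_iota; congr sumn.
by rewrite -[in RHS](map_id (iota 0 k)); apply: eq_map => j; rewrite size_iota.
Qed.

Lemma size_PS B1 B2 k : size (PSof B1 B2 k) = k * size B1 + 'C(k, 2) * size B2.
Proof. by rewrite size_cat !size_allpairs size_iota size_pairs. Qed.

Lemma nth_map8 (f : nat -> nat) s i : size s = 8 -> i < 8 -> nth 0 (map f s) i = f (nth 0 s i).
Proof. by move=> Hs hi; rewrite (nth_map 0) // Hs. Qed.

Lemma nxt_lt i : nxt i < 8.
Proof. exact: ltn_pmod. Qed.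

Lemma nadj_map f s x y : size s = 8 -> nadj s x y -> nadj (map f s) (f x) (f y).
Proof.
move=> Hs /hasP [i]; rewrite mem_iota /= => hi h; apply/hasP; exists i.
  by rewrite mem_iota.
rewrite !nth_map8 // ?nxt_lt //.
by case/orP: h => /andP[/eqP -> /eqP ->]; rewrite !eqxx ?orbT.
Qed.

Lemma nadj_map_inj f s x y : injective f -> size s = 8 ->
  nadj (map f s) (f x) (f y) = nadj s x y.
Proof.
move=> inj Hs; apply: eq_in_has => i; rewrite mem_iota /= => hi.
by rewrite !nth_map8 // ?nxt_lt // !(inj_eq inj).
Qed.

Lemma nadj_sym s x y : nadj s x y = nadj s y x.
Proof. by apply: eq_has => i; rewrite orbC. Qed.

Lemma ninside_map f s s' : injective f -> size s = 8 -> size s' = 8 ->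
  ninside (map f s) (map f s') = ninside s s'.
Proof.
move=> inj Hs Hs'; rewrite /ninside !all_map.
congr [&& _, _ & _].
- by apply: eq_all => x /=; rewrite mem_map.
- by apply: eq_all => x /=; rewrite mem_map.
congr negb; apply: eq_in_has => i; rewrite mem_iota /= => hi.
by rewrite !nth_map8 // ?nxt_lt // nadj_map_inj.
Qed.

Lemma PS_good k B1 B2 : good 19 B1 -> good 32 B2 ->
  all (fun s => (size s == 8) && uniq s && all (fun x => x < (2 + 16 * k).+1) s)
      (PSof B1 B2 k).
Proof.
move=> /allP g1 /allP g2; apply/allP => s; rewrite mem_cat.
case/orP => /allpairsP [[i b] [/= iP bP ->]].
  have /and3P[/eqP sb ub /allP ab] := g1 b bP; move: iP; rewrite mem_iota /= => ik.
  rewrite size_map sb eqxx map_inj_uniq ?ub //=; last exact: emb19_inj.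
  apply/allP => z /mapP [x /ab xb ->]; rewrite /emb19; case: ifP => _; lia.
have /and3P[/eqP sb ub /allP ab] := g2 b bP.
case: i iP => i j; rewrite mem_pairs /= => /andP[ij jk].
rewrite size_map sb eqxx map_inj_uniq ?ub //=; last exact: emb32_inj.
apply/allP => z /mapP [x /ab xb ->]; rewrite /emb32; case: ifP => _; lia.
Qed.

Lemma has19 k B1 B2 i x y : good 19 B1 -> i < k ->
  has (fun b => nadj b x y) B1 ->
  has (fun s => nadj s (emb19 i x) (emb19 i y)) (PSof B1 B2 k).
Proof.
move=> /allP g ik /hasP [b bP nb]; apply/hasP; exists (map (emb19 i) b).
  by rewrite mem_cat; apply/orP; left; apply: allpairs_f => //; rewrite mem_iota.
have /and3P[/eqP sb _ _] := g b bP; exact: nadj_map.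
Qed.

Lemma has32 k B1 B2 i j x y : good 32 B2 -> i < j -> j < k ->
  has (fun b => nadj b x y) B2 ->
  has (fun s => nadj s (emb32 i j x) (emb32 i j y)) (PSof B1 B2 k).
Proof.
move=> /allP g ij jk /hasP [b bP nb]; apply/hasP; exists (map (emb32 i j) b).
  rewrite mem_cat; apply/orP; right.
  by apply/allpairsP; exists ((i, j), b); rewrite /= mem_pairs ij jk.
have /and3P[/eqP sb _ _] := g b bP; exact: nadj_map.
Qed.

Lemma cov19_use B x y : cov19 B -> x < 19 -> y < 19 -> x != y -> ~~ ((x < 3) && (y < 3)) ->
  has (fun b => nadj b x y) B.
Proof.
move=> /allP c hx hy xy nt.
have h1 : x \in iota 0 19 by rewrite mem_iota.
have h2 : y \in iota 0 19 by rewrite mem_iota.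
by move: (allP (c x h1) y h2); rewrite (negPf xy) (negPf nt).
Qed.

Lemma cov32_use B x y : cov32 B -> x < 16 -> y < 16 -> has (fun b => nadj b x (16 + y)) B.
Proof.
move=> /allP c hx hy.
have h1 : x \in iota 0 16 by rewrite mem_iota.
have h2 : y \in iota 0 16 by rewrite mem_iota.
exact: (allP (c x h1) y h2).
Qed.

Definition loc i x := if x < 3 then x else x - 16 * i.

Lemma same_block k B1 B2 : good 19 B1 -> cov19 B1 ->
  forall x y i, i < k -> 3 <= y -> (y - 3) %/ 16 = i -> x != y ->
  (x < 3 \/ (3 <= x /\ (x - 3) %/ 16 = i)) -> has (fun s => nadj s x y) (PSof B1 B2 k).
Proof.
move=> g1 c1 x y i ik y3 yi xy hx.
have ny : (y < 3) = false by apply/negbTE; rewrite -leqNgt.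
have ex : emb19 i (loc i x) = x.
  rewrite /emb19 /loc; case: hx => [x3|[x3 xi]]; first by rewrite x3 x3.
  have nx : (x < 3) = false by apply/negbTE; rewrite -leqNgt.
  rewrite nx; case: ifP; lia.
have ey : emb19 i (loc i y) = y.
  rewrite /emb19 /loc ny; case: ifP; lia.
rewrite -ex -ey; apply: has19 => //; apply: cov19_use => //.
- rewrite /loc; case: hx => [x3|[x3 xi]]; first by rewrite x3; lia.
  have nx : (x < 3) = false by apply/negbTE; rewrite -leqNgt.
  by rewrite nx; lia.
- by rewrite /loc ny; lia.
- by apply: contra xy => /eqP E; rewrite -ex -ey E.
- rewrite /loc ny; have -> : (y - 16 * i < 3) = false by apply/negbTE; rewrite -leqNgt; lia.
  by rewrite andbF.
Qed.

Lemma PS_cover k B1 B2 : good 19 B1 -> good 32 B2 -> cov19 B1 -> cov32 B2 ->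
  forall x y, x < (2 + 16 * k).+1 -> y < (2 + 16 * k).+1 -> x != y ->
  ~~ ((x < 3) && (y < 3)) -> has (fun s => nadj s x y) (PSof B1 B2 k).
Proof.
move=> g1 g2 c1 c2.
have sym : forall x y, has (fun s => nadj s y x) (PSof B1 B2 k) -> has (fun s => nadj s x y) (PSof B1 B2 k).
  by move=> x y; apply: sub_has => s; rewrite nadj_sym.
have diff : forall x y, x < (2 + 16 * k).+1 -> y < (2 + 16 * k).+1 -> 3 <= x -> 3 <= y ->
    (x - 3) %/ 16 < (y - 3) %/ 16 -> has (fun s => nadj s x y) (PSof B1 B2 k).
  move=> x y hx hy x3 y3 lt.
  have ex : emb32 ((x - 3) %/ 16) ((y - 3) %/ 16) ((x - 3) %% 16) = x.
    rewrite /emb32 ltn_pmod //; lia.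
  have ey : emb32 ((x - 3) %/ 16) ((y - 3) %/ 16) (16 + (y - 3) %% 16) = y.
    rewrite /emb32 ltnNge leq_addr /=; lia.
  have jk : (y - 3) %/ 16 < k by lia.
  have H := @has32 k B1 B2 _ _ _ _ g2 lt jk (cov32_use c2 (ltn_pmod (x - 3) (isT : 0 < 16)) (ltn_pmod (y - 3) (isT : 0 < 16))).
  by rewrite ex ey in H.
move=> x y hx hy xy nt.
case: (ltnP x 3) => x3.
  have y3 : 3 <= y by move: nt; rewrite x3 /= -leqNgt.
  by apply: (@same_block k B1 B2 g1 c1 x y ((y - 3) %/ 16)) => //; [lia | left].
case: (ltnP y 3) => y3.
  apply: sym; apply: (@same_block k B1 B2 g1 c1 y x ((x - 3) %/ 16)) => //; [lia | by rewrite eq_sym | by left].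
case: (ltngtP ((x - 3) %/ 16) ((y - 3) %/ 16)) => c.
- exact: diff.
- by apply: sym; apply: diff.
- by apply: (@same_block k B1 B2 g1 c1 x y ((y - 3) %/ 16)) => //; [lia | right].
Qed.

Lemma all2_size (T1 T2 : Type) (r : T1 -> T2 -> bool) s t : all2 r s t -> size s = size t.
Proof. by elim: s t => [|a s IH] [|b t] //= /andP[_ /IH ->]. Qed.

Lemma all2_catE (T1 T2 : Type) (r : T1 -> T2 -> bool) s1 s2 t1 t2 :
  size s1 = size t1 -> all2 r (s1 ++ s2) (t1 ++ t2) = all2 r s1 t1 && all2 r s2 t2.
Proof. by elim: s1 t1 => [|a s IH] [|b t] //= [/IH ->]; rewrite andbA. Qed.

Lemma all2_allpairs (X : eqType) (Y1 Y2 Z1 Z2 : Type) (r : Z1 -> Z2 -> bool)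
  (f : X -> Y1 -> Z1) (g : X -> Y2 -> Z2) (s : seq X) (t : seq Y1) (t' : seq Y2) :
  size t = size t' ->
  (forall x, x \in s -> all2 r [seq f x y | y <- t] [seq g x y | y <- t']) ->
  all2 r [seq f x y | x <- s, y <- t] [seq g x y | x <- s, y <- t'].
Proof.
move=> st; elim: s => [|a s IH] H //=.
rewrite all2_catE ?size_map // H ?mem_head //=.
by apply: IH => x xs; apply: H; rewrite inE xs orbT.
Qed.

Lemma all2_mapmap f B B' : injective f -> all (fun b => size b == 8) B ->
  all (fun b => size b == 8) B' -> all2 ninside B B' ->
  all2 ninside [seq map f b | b <- B] [seq map f b | b <- B'].
Proof.
move=> inj; elim: B B' => [|a B IH] [|a' B'] //= /andP[/eqP sa sB] /andP[/eqP sa' sB'].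
by case/andP=> h1 h2; rewrite ninside_map // h1 IH.
Qed.

Lemma good_size N B : good N B -> all (fun b => size b == 8) B.
Proof. by move=> /allP g; apply/allP => b /g /and3P[]. Qed.

Lemma PS_all2 k B1 B2 B1' B2' : good 19 B1 -> good 19 B1' -> good 32 B2 -> good 32 B2' ->
  all2 ninside B1 B1' -> all2 ninside B2 B2' ->
  all2 ninside (PSof B1 B2 k) (PSof B1' B2' k).
Proof.
move=> g1 g1' g2 g2' a1 a2.
rewrite /PSof all2_catE ?size_allpairs ?(all2_size a1) //.
apply/andP; split; apply: all2_allpairs.
- exact: all2_size a1.
- move=> i _; apply: all2_mapmap => //; [exact: emb19_inj | exact: good_size g1 | exact: good_size g1'].
- exact: all2_size a2.
- case=> i j; rewrite mem_pairs => /andP[ij _]; apply: all2_mapmap => //.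
  + exact: emb32_inj.
  + exact: good_size g2.
  + exact: good_size g2'.
Qed.
Lemma arith k : 8 * (k * 21 + 'C(k, 2) * 32) + 3 = 'C((2 + 16 * k).+1, 2).
Proof.
rewrite !bin2 /= -!divn2.
have h : k * k.-1 = (k * k.-1) %/ 2 * 2.
  rewrite divnK // dvdn2 oddM; case: k => //= k.
  by rewrite negb_and; case: (odd k).
have h2 : (2 + 16 * k).+1 * (2 + 16 * k) = (3 + 16 * k) * (1 + 8 * k) * 2 by nia.
nia.
Qed.

Lemma all2_map2 (A B C D : Type) (r : C -> D -> bool) (f : A -> C) (g : B -> D) s t :
  all2 r (map f s) (map g t) = all2 (fun a b => r (f a) (g b)) s t.
Proof. by elim: s t => [|a s IH] [|b t] //=; rewrite IH. Qed.

Lemma all2_impl (A B : Type) (r r' : A -> B -> bool) (p : pred A) (q : pred B) s t :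
  (forall a b, p a -> q b -> r a b -> r' a b) ->
  all p s -> all q t -> all2 r s t -> all2 r' s t.
Proof.
move=> H; elim: s t => [|a s IH] [|b t] //= /andP[pa ps] /andP[qb qt] /andP[rab rst].
by rewrite H // IH.
Qed.

Lemma arith2 L1 L2 a q C : L1 + 8 * a = C -> L2 + 8 * q = C -> 8 * a + 3 = C -> L1 <= L2.
Proof. lia. Qed.

Lemma main_m m k : m = 2 + 16 * k -> exists P : seq (8.-tuple 'I_m.+1),
  is_maximum_packing P /\ almost_2perfect P.
Proof.
move=> Em.
have := data_ok.
case/and5P=> g1 g1' g2 g2' /and5P[c1 c1' c2 c2' /and4P[a1 a2 /eqP s1 /eqP s2]].
pose PS := PSof B19 B32 k. pose PS' := PSof B19' B32' k.
have h0 : 2 < m.+1 by rewrite Em.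
have H4 : 8 * size PS + 3 = 'C(m.+1, 2) by rewrite size_PS s1 s2 Em arith.
have sz' : size PS' = size PS.
  by rewrite !size_PS -(all2_size a1) -(all2_size a2).
have H4' : 8 * size PS' + 3 = 'C(m.+1, 2) by rewrite sz'.
have gd := PS_good k g1 g2; have gd' := PS_good k g1' g2'.
have cv := @PS_cover k _ _ g1 g2 c1 c2; have cv' := @PS_cover k _ _ g1' g2' c1' c2'.
rewrite -Em in gd gd' cv cv'.
have [pk lv] := decomp_ok h0 gd cv H4.
have [pk' lv'] := decomp_ok h0 gd' cv' H4'.
exists (map (ct m) PS); split.
  split; first exact: pk.
  move=> Q pQ.
  have H4m : 8 * size (map (ct m) PS) + 3 = 'C(m.+1, 2) by rewrite size_map.
  exact: (arith2 (leave_count pk) (leave_count pQ) H4m).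
exists (map (ct m) PS'); split; last by rewrite lv lv'.
- by rewrite !size_map.
- rewrite all2_map2.
  apply: (all2_impl _ gd gd' (PS_all2 k g1 g1' g2 g2' a1 a2)).
  move=> a b /andP[/andP[/eqP sa ua] la] /andP[/andP[/eqP sb ub] lb] nab.
  exact: ct_inside.
- exact: pk'.
Qed.

Theorem lemma3p2 (n : nat) :
  n %% 16 = 3 -> 19 <= n ->
  exists P : seq (8.-tuple 'I_n),
    is_maximum_packing P /\ almost_2perfect P.
Proof.
move=> H _.
have [k ->] : exists k, n = (2 + 16 * k).+1 by exists (n %/ 16); lia.
exact: (@main_m _ k erefl).
Qed.
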